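(* Let $X$ be a real Banach space. The following statements are equivalent. (1) $X$ is rotund. (2) $r(Q_{B_X}(x_1),Q_{B_X}(x_2))=\|x_1-x_2\|$ for every $x_1,x_2\in S_X$. (3) $r(Q_{S_X}(x_1),Q_{S_X}(x_2))=\|x_1-x_2\|$ for every $x_1,x_2\in S_X$. (4) $r(Q_{S_X}(x_1),Q_{S_X}(x_2))=\|x_1-x_2\|$ for every $x_1,x_2\in S_X$ with $x_1\neq x_2$.
   Context: $B_X$ and $S_X$ denote the closed unit ball and unit sphere of $X$. For a non-empty bounded $F\subseteq X$ and $x\in X$, $r(F,x)=\sup\{\|x-y\|:y\in F\}$ and $Q_F(x)=\{y\in F:\|x-y\|=r(F,x)\}$. For non-empty bounded sets $A,B$, the generalized diameter is $r(A,B)=\sup\{\|a-b\|:a\in A,b\in B\}$. $X$ is rotund if $\|\frac{x_1+x_2}{2}\|<1$ whenever $x_1,x_2\in S_X$, $x_1\neq x_2$. *)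

(* Defs.v *)
From HB Require Import structures.
From mathcomp Require Import all_boot all_order all_algebra.
From mathcomp Require Import all_classical all_reals all_analysis.
Set Implicit Arguments. Unset Strict Implicit. Unset Printing Implicit Defensive.
Import Order.TTheory GRing.Theory Num.Theory.
Import numFieldNormedType.Exports.
Local Open Scope classical_set_scope.
Local Open Scope ring_scope.

Section Defs.
Variables (R : realType) (X : normedModType R).

Definition unit_ball : set X := [set x | `|x| <= 1].
Definition unit_sphere : set X := [set x | `|x| = 1].

Definition rad (F : set X) (x : X) : R := sup [set `|x - y| | y in F].

Definition farthest (F : set X) (x : X) : set X :=
  [set y | F y /\ `|x - y| = rad F x].

Definition gen_diam (A B : set X) : R :=
  sup [set `|a - b| | a in A & b in B].

Definition rotund : Prop :=
  forall x1 x2 : X, `|x1| = 1 -> `|x2| = 1 -> x1 <> x2 ->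
    `|(2%:R)^-1 *: (x1 + x2)| < 1.
End Defs.
Arguments rotund R X : clear implicits.
Arguments unit_ball R X : clear implicits.
Arguments unit_sphere R X : clear implicits.

(* Main.v *)
Require Import Defs.
From HB Require Import structures.
From mathcomp Require Import all_boot all_order all_algebra.
From mathcomp Require Import all_classical all_reals all_analysis.
From mathcomp Require Import ring lra.
Import Order.TTheory GRing.Theory Num.Theory.
Import numFieldNormedType.Exports.
Local Open Scope classical_set_scope.
Local Open Scope ring_scope.

Section Aux.
Variables (R : realType) (X : completeNormedModType R).

Lemma sup_max (E : set R) c : E c -> ubound E c -> sup E = c.
Proof.
move=> Ec ub; apply/le_anti/andP; split.
  by apply: ge_sup => //; exists c.
by apply: ub_le_sup => //; exists c.
Qed.

Definition Qs (x : X) : set X := [set y | `|y| = 1 /\ `|x - y| = 2].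

Lemma dist_le2 (x y : X) : `|x| = 1 -> `|y| <= 1 -> `|x - y| <= 2.
Proof.
move=> hx hy; apply: (le_trans (ler_normB _ _)); rewrite hx.
by rewrite -[2]/(1 + 1); rewrite lerD2l.
Qed.

Lemma rad_ball (x : X) : `|x| = 1 -> Defs.rad (unit_ball R X) x = 2.
Proof.
move=> hx; apply: sup_max.
  exists (- x); first by rewrite /unit_ball /= normrN hx.
  by rewrite opprK -mulr2n normrMn hx.
by move=> _ [y hy <-]; apply: dist_le2.
Qed.

Lemma rad_sphere (x : X) : `|x| = 1 -> Defs.rad (unit_sphere R X) x = 2.
Proof.
move=> hx; apply: sup_max.
  exists (- x); first by rewrite /unit_sphere /= normrN hx.
  by rewrite opprK -mulr2n normrMn hx.
by move=> _ [y hy <-]; apply: dist_le2 => //; rewrite hy.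
Qed.

Lemma far_ball (x : X) : `|x| = 1 -> farthest (unit_ball R X) x = Qs x.
Proof.
move=> hx; rewrite /farthest rad_ball //; apply/seteqP; split => y /=.
  move=> [hy hd]; split => //; apply/le_anti; rewrite /unit_ball /= in hy; rewrite hy /=.
  have := ler_normB x y; rewrite hd hx => h.
  by rewrite -(lerD2l 1) -[1 + 1]/2.
by move=> [hy hd]; split => //; rewrite /unit_ball /= hy.
Qed.

Lemma far_sphere (x : X) : `|x| = 1 -> farthest (unit_sphere R X) x = Qs x.
Proof.
move=> hx; rewrite /farthest rad_sphere //.
Qed.

Lemma Qs_bound (A B : set X) : A `<=` [set y | `|y| = 1] -> B `<=` [set y | `|y| = 1] ->
  has_ubound [set `|a - b| | a in A & b in B].
Proof.
move=> hA hB; exists 2 => _ [a Aa [b Bb <-]].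
by apply: dist_le2; [apply: hA | rewrite (hB _ Bb)].
Qed.

Lemma half_norm (x : X) : `|(2%:R)^-1 *: x| = `|x| / 2.
Proof. by rewrite normrZ ger0_norm ?invr_ge0 ?ler0n // mulrC. Qed.

Lemma rot_Qs (x : X) : rotund R X -> `|x| = 1 -> Qs x = [set - x].
Proof.
move=> rot hx; apply/seteqP; split => y /=.
  move=> [hy hd]; apply/eqP/negPn/negP => /eqP ne.
  have := rot x (- y) hx; rewrite normrN hy => /(_ erefl).
  have ne' : x <> - y by move=> e; apply: ne; rewrite e opprK.
  by move=> /(_ ne'); rewrite half_norm hd divff ?ltxx // pnatr_eq0.
move=> ->; rewrite /Qs /= normrN hx; split => //.
by rewrite opprK -mulr2n normrMn hx.
Qed.

Lemma partA (x1 x2 : X) : rotund R X -> `|x1| = 1 -> `|x2| = 1 ->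
  gen_diam (Qs x1) (Qs x2) = `|x1 - x2|.
Proof.
move=> rot h1 h2; rewrite /gen_diam !rot_Qs //.
apply: sup_max.
  by exists (- x1) => //; exists (- x2) => //; rewrite opprK addrC distrC.
move=> _ [a -> [b -> <-]].
by rewrite opprK addrC distrC.
Qed.

Lemma partB : (forall x1 x2 : X, `|x1| = 1 -> `|x2| = 1 -> x1 <> x2 ->
  gen_diam (Qs x1) (Qs x2) = `|x1 - x2|) -> rotund R X.
Proof.
move=> H x1 x2 h1 h2 ne.
rewrite ltNge; apply/negP => hm.
have hm1 : `|(2%:R)^-1 *: (x1 + x2)| = 1.
  apply/le_anti; rewrite hm andbT half_norm ler_pdivrMr ?ltr0n // mul1r.
  by apply: (le_trans (ler_normD _ _)); rewrite h1 h2.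
have hs : `|x1 + x2| = 2.
  by move: hm1; rewrite half_norm => /(congr1 (fun t => t * 2)); rewrite divfK ?pnatr_eq0 // mul1r.
have h3 : `|3%:R *: x1 + x2| <= 4.
  apply: (le_trans (ler_normD _ _)); rewrite normrZ h1 h2 ger0_norm ?ler0n //.
  by rewrite mulr1; lra.
have h4 : `|x1 + 3%:R *: x2| <= 4.
  apply: (le_trans (ler_normD _ _)); rewrite normrZ h1 h2 ger0_norm ?ler0n //.
  by rewrite mulr1; lra.
have hsum : (3%:R *: x1 + x2) + (x1 + 3%:R *: x2) = 4%:R *: (x1 + x2).
  have e4 : (4%:R : R) = 3%:R + 1 by lra.
  by rewrite e4 scalerDr !scalerDl !scale1r addrACA [x2 + _]addrC.
have h8 : 8 <= `|3%:R *: x1 + x2| + `|x1 + 3%:R *: x2|.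
  apply: le_trans (ler_normD _ _); rewrite hsum normrZ hs ger0_norm ?ler0n //.
  lra.
have e3 : `|3%:R *: x1 + x2| = 4.
  apply/le_anti; rewrite h3 /=; lra.
have e4 : `|x1 + 3%:R *: x2| = 4.
  apply/le_anti; rewrite h4 /=; lra.
pose m := (2%:R)^-1 *: (x1 + x2).
have d1 : `|- m - x1| = 2.
  have -> : - m - x1 = - ((2%:R)^-1 *: (3%:R *: x1 + x2)).
    rewrite -opprD; congr (- _); rewrite /m !scalerDr scalerA addrAC; congr (_ + _).
    rewrite -[x1 in _ + x1]scale1r -scalerDl; congr (_ *: _); by field.
  by rewrite normrN half_norm e3; lra.
have d2 : `|- m - x2| = 2.
  have -> : - m - x2 = - ((2%:R)^-1 *: (x1 + 3%:R *: x2)).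
    rewrite -opprD; congr (- _); rewrite /m !scalerDr scalerA -addrA; congr (_ + _).
    rewrite -[x2 in _ + x2]scale1r -scalerDl; congr (_ *: _); by field.
  by rewrite normrN half_norm e4; lra.
have hd : `|x1 - x2| > 0 by rewrite normr_gt0 subr_eq0; apply/eqP.
have hmx : m - x1 = (2%:R)^-1 *: (x2 - x1).
  rewrite /m [X in _ - X](_ : x1 = 2^-1 *: (2 *: x1)); last first.
    by rewrite scalerA mulVf ?pnatr_eq0 // scale1r.
  rewrite -scalerBr; congr (_ *: _).
  by rewrite scaler_nat mulr2n opprD addrA [x1 + x2]addrC addrK.
have Qu1 : Qs (- x1) x2 by split => //; rewrite -opprD normrN hs.
have Qv1 : Qs (- m) x1 by split.
have bnd := @Qs_bound (Qs (- x1)) (Qs (- m)) (fun y h => proj1 h) (fun y h => proj1 h).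
have ge : `|x2 - x1| <= gen_diam (Qs (- x1)) (Qs (- m)).
  by apply: ub_le_sup => //; exists x2 => //; exists x1.
have uv : `|- x1 - - m| = `|x1 - x2| / 2.
  by rewrite opprK addrC hmx half_norm distrC.
have hmn : `|- m| = 1 by rewrite normrN hm1.
case: (eqVneq (- x1) (- m)) => [e|nev].
  move: uv; rewrite e subrr normr0 => /esym/eqP.
  by rewrite mulf_eq0 invr_eq0 pnatr_eq0 orbF => /eqP h0; move: hd; rewrite h0 ltxx.
move: ge; rewrite H ?normrN //; last by apply/eqP.
rewrite uv distrC => h; lra.
Qed.

End Aux.

Theorem theorem3p3 (R : realType) (X : completeNormedModType R) :
  [/\ (rotund R X <->
        (forall x1 x2 : X, unit_sphere R X x1 -> unit_sphere R X x2 ->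
          gen_diam (farthest (unit_ball R X) x1) (farthest (unit_ball R X) x2)
          = `|x1 - x2|)),
      (rotund R X <->
        (forall x1 x2 : X, unit_sphere R X x1 -> unit_sphere R X x2 ->
          gen_diam (farthest (unit_sphere R X) x1) (farthest (unit_sphere R X) x2)
          = `|x1 - x2|)) &
      (rotund R X <->
        (forall x1 x2 : X, unit_sphere R X x1 -> unit_sphere R X x2 -> x1 <> x2 ->
          gen_diam (farthest (unit_sphere R X) x1) (farthest (unit_sphere R X) x2)
          = `|x1 - x2|))].
Proof.
split; split.
- move=> rot x1 x2 h1 h2; rewrite !far_ball //; exact: partA.
- move=> H; apply: partB => x1 x2 h1 h2 _.
  by have := H x1 x2 h1 h2; rewrite !far_ball.
- move=> rot x1 x2 h1 h2; rewrite !far_sphere //; exact: partA.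
- move=> H; apply: partB => x1 x2 h1 h2 _.
  by have := H x1 x2 h1 h2; rewrite !far_sphere.
- move=> rot x1 x2 h1 h2 _; rewrite !far_sphere //; exact: partA.
- move=> H; apply: partB => x1 x2 h1 h2 ne.
  by have := H x1 x2 h1 h2 ne; rewrite !far_sphere.
Qed.
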